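(* Let $\vec G$ and $\vec H$ be oriented graphs. Then $\vec G$ and $\vec H$ are push-equivalent (i.e. $\vec H$ can be obtained from $\vec G$ by pushing some set of vertices, up to isomorphism) if and only if their anti-twinned graphs $R(\vec G)$ and $R(\vec H)$ are isomorphic as oriented graphs.
   Context: An oriented graph is a directed graph with no loops and no pair of opposite arcs. To push a vertex $v$ of an oriented graph means to reverse the orientation of every arc incident with $v$. Two oriented graphs are push-equivalent if one can be obtained from the other by pushing some set of vertices; this is an equivalence relation, and the equivalence class $[\vec G]$ of $\vec G$ is called a push graph; its elements are called presentations of $[\vec G]$. Given an oriented graph $\vec G$ with vertex set $\{v_1,\dots,v_k\}$, its anti-twinned graph $R(\vec G)$ is the oriented graph with vertex set $\{v_1,\dots,v_k\}\cup\{v_1',\dots,v_k'\}$ (where $v_i'$ are new vertices) and arc set $\{v_iv_j,\ v_i'v_j',\ v_jv_i',\ v_j'v_i : v_iv_j \text{ an arc of } \vec G\}$. (Up to isomorphism $R(\vec G)$ does not depend on which presentation of $[\vec G]$ is used.) An isomorphism of oriented graphs is a bijection $h$ on vertices such that $xy$ is an arc iff $h(x)h(y)$ is an arc. *)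

(* Defs.v *)
From mathcomp Require Import all_boot.
Set Implicit Arguments. Unset Strict Implicit. Unset Printing Implicit Defensive.

Definition oriented (V : finType) (a : rel V) : Prop :=
  (forall x, ~~ a x x) /\ (forall x y, ~~ (a x y && a y x)).

Definition push (V : finType) (a : rel V) (S : {set V}) : rel V :=
  fun x y => if (x \in S) (+) (y \in S) then a y x else a x y.

Definition oiso (V W : finType) (a : rel V) (b : rel W) : Prop :=
  exists h : V -> W, bijective h /\ forall x y, a x y = b (h x) (h y).

Definition push_equiv (V W : finType) (a : rel V) (b : rel W) : Prop :=
  exists S : {set V}, oiso (push a S) b.

(* Anti-twinned graph R(G) on V + V; inl v = v, inr v = v'.
   Arcs: v_i v_j, v_i' v_j', v_j v_i', v_j' v_i for each arc v_i v_j. *)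
Definition anti_twin (V : finType) (a : rel V) : rel (V + V)%type :=
  fun x y => match x, y with
  | inl i, inl j => a i j
  | inr i, inr j => a i j
  | inl j, inr i => a i j
  | inr j, inl i => a i j
  end.

(* Main.v *)
Require Import Defs.
From mathcomp Require Import all_boot.
Set Implicit Arguments. Unset Strict Implicit. Unset Printing Implicit Defensive.

Definition sw {V : Type} (x : V + V) : V + V :=
  match x with inl v => inr v | inr v => inl v end.

Lemma swK (V : Type) : involutive (@sw V).
Proof. by case. Qed.

Lemma at_id (V : finType) (a : rel V) x z :
  anti_twin a x z = anti_twin a (sw z) x.
Proof. by case: x => i; case: z => j. Qed.

Lemma at_id2 (V : finType) (a : rel V) y z :
  anti_twin a z (sw y) = anti_twin a y z.
Proof. by rewrite at_id swK. Qed.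

Definition iso_map (V W : finType) (a : rel V) (b : rel W) (H : V -> W) :=
  bijective H /\ forall x y, a x y = b (H x) (H y).

Definition badset (V W : finType) (H : V + V -> W + W) : {set V} :=
  [set v | H (inr v) != sw (H (inl v))].

Definition tsw (T : eqType) (q r : T) (x : T) :=
  if x == q then r else if x == r then q else x.

Lemma tswK (T : eqType) (q r : T) : involutive (tsw q r).
Proof.
move=> x; rewrite /tsw.
case: (eqVneq x q) => [->|xq].
  rewrite eqxx; case: (eqVneq r q) => [->|rq]; by rewrite ?eqxx ?(negbTE rq).
case: (eqVneq x r) => [->|xr]; first by rewrite eqxx.
by rewrite (negbTE xq) (negbTE xr).
Qed.

Lemma tsw_auto (T : eqType) (c : rel T) q r :
  (forall z, c q z = c r z) -> (forall z, c z q = c z r) ->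
  forall x y, c x y = c (tsw q r x) (tsw q r y).
Proof.
move=> H1 H2 x y; rewrite /tsw.
case: (eqVneq x q) => [->|xq]; case: (eqVneq y q) => [->|yq] //.
all: try case: (eqVneq x r) => [->|xr]; try case: (eqVneq y r) => [->|yr].
all: by rewrite ?H1 ?H2.
Qed.

Lemma step (V W : finType) (a : rel V) (b : rel W) H v :
  iso_map (anti_twin a) (anti_twin b) H -> v \in badset H ->
  exists H', iso_map (anti_twin a) (anti_twin b) H' /\
             #|badset H'| < #|badset H|.
Proof.
move=> [Hb Hi] vb.
have Hinj := bij_inj Hb.
case: Hb => Hv HK KH.
set p := H (inl v); set q := H (inr v); set r := sw p.
have tw1 : forall z, anti_twin b q z = anti_twin b r z.
  move=> z; rewrite -(KH z) /q /r; set z' := Hv z.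
  by rewrite -Hi -(at_id b (H z') p) /p -Hi -(at_id a z' (inl v)).
have tw2 : forall z, anti_twin b z q = anti_twin b z r.
  move=> z; rewrite -(KH z) /q /r; set z' := Hv z.
  by rewrite -Hi at_id2 /p -Hi (at_id a z' (inr v)).
exists (fun x => tsw q r (H x)); split.
  split; last by move=> x y; rewrite Hi; apply: tsw_auto.
  exists (fun y => Hv (tsw q r y)) => x; first by rewrite tswK HK.
  by rewrite KH tswK.
have pq : (p == q) = false.
  by apply/negbTE/eqP => /Hinj.
have pr : (p == r) = false.
  by rewrite /r; case: (p).
have sub : badset (fun x => tsw q r (H x)) \subset badset H :\ v.
  apply/subsetP => u; rewrite !inE => bu; apply/andP; split.
    apply/eqP => uv; move: bu; rewrite uv /tsw -/p -/q pq pr eqxx /= /r.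
    by rewrite eqxx.
  case: (eqVneq (H (inr u)) (sw (H (inl u)))) => [gu|//]; exfalso; move: bu.
  have uv : u != v by apply/eqP => uv; move: vb; rewrite inE -uv gu eqxx.
  have a1 : (H (inl u) == q) = false by apply/negbTE/eqP => /Hinj.
  have a2 : (H (inl u) == r) = false.
    apply/negbTE/eqP => e; move: gu; rewrite e /r swK => /Hinj.
    done.
  have a3 : (H (inr u) == q) = false.
    by apply/negbTE/eqP => /Hinj [] /eqP; rewrite (negbTE uv).
  have a4 : (H (inr u) == r) = false.
    apply/negbTE/eqP; rewrite gu /r => e.
    have : sw (sw (H (inl u))) = sw (sw p) by rewrite e.
    rewrite !swK => /Hinj [] /eqP; rewrite (negbTE uv) //.
  by rewrite /tsw a1 a2 a3 a4 gu eqxx.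
apply: (leq_trans (n := #|badset H :\ v|.+1)).
  by rewrite ltnS; apply: subset_leq_card.
by rewrite [X in _ <= X](cardsD1 v) vb.
Qed.

Lemma fix_all (V W : finType) (a : rel V) (b : rel W) n H :
  #|badset H| <= n ->
  iso_map (anti_twin a) (anti_twin b) H ->
  exists H', iso_map (anti_twin a) (anti_twin b) H' /\ badset H' = set0.
Proof.
elim: n H => [|n IH] H.
  rewrite leqn0 cards_eq0 => /eqP e ih; by exists H.
move=> hn ih.
case: (set_0Vmem (badset H)) => [e|[v vb]]; first by exists H.
have [H' [ih' lt]] := step ih vb.
apply: (IH H') => //; by rewrite -ltnS (leq_trans lt).
Qed.

Theorem theorem1 (V W : finType) (a : rel V) (b : rel W) :
  oriented a -> oriented b ->
  (push_equiv a b <-> oiso (anti_twin a) (anti_twin b)).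
Proof.
move=> _ _; split.
- case=> S [h [[hi hK Kh] E]].
  exists (fun x => match x with
                   | inl v => if v \in S then inr (h v) else inl (h v)
                   | inr v => if v \in S then inl (h v) else inr (h v) end).
  split.
    exists (fun y => match y with
                   | inl w => if hi w \in S then inr (hi w) else inl (hi w)
                   | inr w => if hi w \in S then inl (hi w) else inr (hi w) end).
      by case=> v; case: ifP => vS; rewrite /= hK vS.
    by case=> w; case: ifP => wS; rewrite /= Kh wS.
  case=> i; case=> j; case Hi: (i \in S); case Hj: (j \in S);
    by rewrite /= -E /push Hi Hj.
- case=> H0 [Hb0 Hi0].
  have [H [[Hb Hi] e]] := fix_all (n := #|badset H0|) (leqnn _) (conj Hb0 Hi0).
  have good : forall v, H (inr v) = sw (H (inl v)).
    move=> v; apply/eqP; apply/negPn; apply/negP => bv.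
    have : v \in badset H by rewrite inE.
    by rewrite e inE.
  pose h v := match H (inl v) with inl w => w | inr w => w end.
  pose S := [set v | if H (inl v) is inr _ then true else false].
  have key : forall v, H (inl v) = if v \in S then inr (h v) else inl (h v).
    by move=> v; rewrite /h inE; case: (H (inl v)).
  have Hinj := bij_inj Hb.
  exists S, h; split.
    apply: inj_card_bij.
      move=> u v huv; move: (key u) (key v) (good u) (good v).
      rewrite huv; case: (u \in S); case: (v \in S) => ku kv gu gv.
      + have : H (inl u) = H (inl v) by rewrite ku kv.
        by move/Hinj => [].
      + have : H (inr v) = H (inl u) by rewrite gv kv ku.
        by move/Hinj.
      + have : H (inr v) = H (inl u) by rewrite gv kv ku.
        by move/Hinj.
      + have : H (inl u) = H (inl v) by rewrite ku kv.
        by move/Hinj => [].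
    have := bij_eq_card Hb; rewrite !card_sum !addnn => /double_inj ->.
    by [].
  move=> x y; rewrite /push.
  have Ei := Hi (inl x) (inl y); have Ej := Hi (inl y) (inl x).
  rewrite /= !key in Ei Ej.
  case Hx: (x \in S); case Hy: (y \in S); rewrite Hx Hy /= in Ei Ej *.
  + by rewrite Ei.
  + by rewrite Ej.
  + by rewrite Ej.
  + by rewrite Ei.
Qed.
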